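(* In the setting described in the context, fix $i$ with $0\le w_i<1$ and $j\in\{1,\ldots,p\}$. Then \[ f_i^{(-j)}(x)=a_jx(1-x)^{p-2}+b_j(1-x)^{p-1},\qquad x\in[0,1], \] for some constants $a_j\ge0$ and $b_j\ge0$. If $f(\mathbf{w})>0$, then $f_i^{(-j)}(x)>0$ for all $x\in(0,1)$, which implies $a_j+b_j>0$. If $0<w_i<1$, then $b_j=f_i^{(-j)}(0)$ and $a_j=[f_{-j}(\mathbf{w})-b_j(1-w_i)^{p-1}]/[w_i(1-w_i)^{p-2}]$; if $w_i=0$, then $b_j=f_{-j}(\mathbf{w})$ and $a_j=2^{p-1}f_i^{(-j)}(1/2)-b_j$.
   Context: Let $m>p\ge2$. Given a model matrix $\mathbf{X}\in\mathbb{R}^{m\times p}$ (rows $\mathbf{q}(\mathbf{x}_i)^T$ for distinct design points under a generalized linear model) and numbers $\nu_1,\ldots,\nu_m\ge0$ (where $\nu_i=(\partial\mu_i/\partial\eta_i)^2/\mathrm{Var}(Y_i)$), for $\mathbf{w}=(w_1,\ldots,w_m)^T$ with $w_i\ge0$, $\sum_iw_i=1$, let $\mathbf{W}=\mathrm{diag}\{w_1\nu_1,\ldots,w_m\nu_m\}$, $f(\mathbf{w})=|\mathbf{X}^T\mathbf{W}\mathbf{X}|$, and $f_{-j}(\mathbf{w})=|\mathbf{X}_{-j}^T\mathbf{W}\mathbf{X}_{-j}|$, where $\mathbf{X}_{-j}$ is $\mathbf{X}$ with its $j$th column removed. Given $\mathbf{w}$ and $i$ with $0\le w_i<1$, for $x\in[0,1]$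 let $\mathbf{w}^{(i)}(x)=\big(\tfrac{1-x}{1-w_i}w_1,\ldots,\tfrac{1-x}{1-w_i}w_{i-1},x,\tfrac{1-x}{1-w_i}w_{i+1},\ldots,\tfrac{1-x}{1-w_i}w_m\big)^T$ and $f_i^{(-j)}(x)=f_{-j}(\mathbf{w}^{(i)}(x))$. *)

(* Defs.v *)
From mathcomp Require Import all_boot all_order all_algebra.
Set Implicit Arguments. Unset Strict Implicit. Unset Printing Implicit Defensive.
Import Order.TTheory GRing.Theory Num.Theory.
Local Open Scope ring_scope.

Definition Wmx (R : realFieldType) (m : nat) (nu w : 'I_m -> R) : 'M[R]_m :=
  diag_mx (\row_k (w k * nu k)).

Definition fdet (R : realFieldType) (m p : nat) (X : 'M[R]_(m, p))
    (nu w : 'I_m -> R) : R :=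
  \det (X^T *m Wmx nu w *m X).

Definition fminus (R : realFieldType) (m p : nat) (X : 'M[R]_(m, p)) (j : 'I_p)
    (nu w : 'I_m -> R) : R :=
  \det ((col' j X)^T *m Wmx nu w *m col' j X).

Definition wpath (R : realFieldType) (m : nat) (w : 'I_m -> R) (i : 'I_m) (x : R)
    : 'I_m -> R :=
  fun k => if k == i then x else (1 - x) / (1 - w i) * w k.

Definition fij (R : realFieldType) (m p : nat) (X : 'M[R]_(m, p)) (nu w : 'I_m -> R)
    (i : 'I_m) (j : 'I_p) (x : R) : R :=
  fminus X j nu (wpath w i x).

(* Main.v *)
Require Import Defs.
From mathcomp Require Import all_boot all_order all_algebra.
From mathcomp Require Import ring lra.
Set Implicit Arguments. Unset Strict Implicit. Unset Printing Implicit Defensive.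
Import Order.TTheory GRing.Theory Num.Theory.
Local Open Scope ring_scope.

Section PD.
Variable R : realFieldType.

Lemma pd_block N (a : 'M[R]_1) (r : 'M[R]_(1, N)) (c : 'M[R]_(N, 1)) (D : 'M[R]_N) :
  (forall S : 'M[R]_N, S^T = S ->
     (forall u : 'rV_N, u != 0 -> 0 < (u *m S *m u^T) 0 0) -> 0 < \det S) ->
  (block_mx a r c D)^T = block_mx a r c D ->
  (forall u : 'rV_(1 + N), u != 0 -> 0 < (u *m block_mx a r c D *m u^T) 0 0) ->
  0 < \det (block_mx a r c D).
Proof.
move=> IH Msym Mpd.
move: Msym; rewrite tr_block_mx => /eq_block_mx [asym cr rc Dsym].
set al := a 0 0.
have aE : a = al%:M by rewrite {1}(mx11_scalar a).
have al_gt0 : 0 < al.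
  have := Mpd (row_mx 1 0).
  rewrite mul_row_block !mul1mx !mul0mx !addr0 tr_row_mx mul_row_col trmx1 trmx0.
  rewrite mulmx1 mulmx0 addr0; apply.
  apply/negP => /eqP; rewrite -row_mx0 => /eq_row_mx [/eqP].
  by rewrite oner_eq0.
have al_neq0 : al != 0 by rewrite gt_eqF.
set S := D - al^-1 *: (c *m r).
have detE : \det (block_mx a r c D) = al * \det S.
  have E : block_mx a r c D *m block_mx 1%:M (- (al^-1 *: r)) 0 1%:M
           = block_mx a 0 c S.
    rewrite mulmx_block !mulmx1 !mulmx0 !addr0 aE mul_scalar_mx.
    rewrite scalerN scalerA mulfV // scale1r addNr.
    by rewrite mulmxN -scalemxAr addrC.
  have := congr1 determinant E.
  rewrite det_mulmx det_ublock !det1 !mulr1 => ->.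
  by rewrite det_lblock aE det_scalar1.
rewrite detE mulr_gt0 //; apply: IH.
  rewrite /S linearB /= linearZ /= trmx_mul Dsym rc cr //.
move=> v vN0.
pose t : 'M[R]_1 := - (al^-1 *: (v *m c)).
have := Mpd (row_mx t v).
have -> : row_mx t v *m block_mx a r c D = row_mx 0 (v *m S).
  rewrite mul_row_block aE mul_mx_scalar /t scalerN scalerA mulfV // scale1r addNr.
  congr row_mx.
  rewrite /S mulmxBr -scalemxAr mulmxA addrC.
  by rewrite mulNmx -scalemxAl.
rewrite tr_row_mx mul_row_col mul0mx add0r; apply.
apply/negP => /eqP; rewrite -row_mx0 => /eq_row_mx [_ /eqP].
by rewrite (negPf vN0).
Qed.

Lemma pd_det N (M : 'M[R]_N) : M^T = M ->
  (forall u : 'rV_N, u != 0 -> 0 < (u *m M *m u^T) 0 0) -> 0 < \det M.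
Proof.
elim: N M => [|N IH] M Msym Mpd; first by rewrite det_mx00.
have := submxK (M : 'M_(1 + N)) => E.
move: Msym Mpd; rewrite -E => Msym Mpd.
exact: pd_block.
Qed.
Lemma rank1_det0 n (y : 'rV[R]_n.+2) : \det (y^T *m y) = 0.
Proof.
have E := mul_row_col y^T (0 : 'M[R]_(n.+2, n.+1)) y (0 : 'M[R]_(n.+1, n.+2)).
rewrite mulmx0 addr0 in E.
rewrite -E (@det_mulmx _ n.+2).
rewrite (expand_det_col _ (rshift 1 (0 : 'I_n.+1))) big1 ?mul0r // => i _.
by rewrite row_mxEr mxE mul0r.
Qed.
Lemma rank1_affine N (A : 'M[R]_N) (y : 'rV[R]_N) :
  exists q, forall u, \det (A + u *: (y^T *m y)) = \det A + u * q.
Proof.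
exists (\det (block_mx (0 : 'M[R]_1) (- y) y^T A)) => u.
pose Z (v : R) := block_mx (1%:M : 'M[R]_1) (- (v *: y)) y^T A.
have ZE v : \det (A + v *: (y^T *m y)) = \det (Z v).
  have E : Z v *m block_mx 1%:M (v *: y) 0 1%:M = block_mx 1%:M 0 y^T (A + v *: (y^T *m y)).
    rewrite mulmx_block !mulmx1 !mulmx0 !addr0 mul1mx subrr.
    by rewrite -scalemxAr addrC.
  have := congr1 determinant E.
  by rewrite det_mulmx det_ublock det_lblock !det1 !mul1r !mulr1 => ->.
rewrite ZE.
have -> : \det A = \det (Z 0) by rewrite -ZE scale0r addr0.
rewrite -[\det (Z 0)]mul1r.
apply: (@determinant_multilinear _ _ _ _ _ (lshift N (0 : 'I_1))).
- rewrite /Z !block_mxEv !rowKu !row_id.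
  by rewrite !scale_row_mx add_row_mx !scale1r !scaler0 addr0 scale0r oppr0 add0r scalerN.
- by rewrite /Z !block_mxEv !row'Ku; f_equal; apply/matrixP => -[].
- by rewrite /Z !block_mxEv !row'Ku; f_equal; apply/matrixP => -[].
Qed.

Lemma det_path n (A : 'M[R]_n.+1) (y : 'rV[R]_n.+1) (c : R) :
  exists q, forall x, \det ((1 - x) *: A + (x * c) *: (y^T *m y))
     = x * (c * q) * (1 - x) ^+ n + \det A * (1 - x) ^+ n.+1.
Proof.
have [q Hq] := rank1_affine A y.
exists q => x.
have [->|x1] := eqVneq x 1.
  rewrite subrr scale0r add0r !mul1r detZ [0 ^+ n.+1]expr0n /= mulr0 addr0.
  case: n A y Hq => [|n] A y Hq.
    have := Hq 1; rewrite !det_mx11 !mxE !mul1r => /addrI ->.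
    by rewrite expr1 expr0 mulr1.
  by rewrite rank1_det0 mulr0 expr0n /= mulr0.
have s0 : 1 - x != 0 by rewrite subr_eq0 eq_sym.
have -> : (1 - x) *: A + (x * c) *: (y^T *m y)
        = (1 - x) *: (A + (x * c / (1 - x)) *: (y^T *m y)).
  by rewrite scalerDr scalerA; congr (_ + _ *: _); field.
rewrite detZ Hq exprS; field.
by [].
Qed.
Lemma gram_quad m N (Z : 'M[R]_(m, N)) (d : 'I_m -> R) (u : 'rV_N) :
  (u *m (Z^T *m diag_mx (\row_k d k) *m Z) *m u^T) 0 0
  = \sum_k d k * ((Z *m u^T) k 0) ^+ 2.
Proof.
have -> : u *m (Z^T *m diag_mx (\row_k d k) *m Z) *m u^T
        = (Z *m u^T)^T *m diag_mx (\row_k d k) *m (Z *m u^T).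
  by rewrite trmx_mul trmxK !mulmxA.
set z := Z *m u^T.
rewrite mxE; apply: eq_bigr => k _.
rewrite mul_mx_diag !mxE; ring.
Qed.

Lemma gram_sym m N (Z : 'M[R]_(m, N)) (d : 'I_m -> R) :
  (Z^T *m diag_mx (\row_k d k) *m Z)^T = Z^T *m diag_mx (\row_k d k) *m Z.
Proof. by rewrite !trmx_mul tr_diag_mx trmxK mulmxA. Qed.

Lemma singular_det N (M : 'M[R]_N) (v : 'cV_N) : M *m v = 0 -> v != 0 -> \det M = 0.
Proof.
move=> Mv vn0; have : (\det M)%:M *m v = 0 by rewrite -mul_adj_mx -mulmxA Mv mulmx0.
by rewrite mul_scalar_mx => /eqP; rewrite scaler_eq0 (negPf vn0) orbF => /eqP.
Qed.

Lemma gram_quad_ge0 m N (Z : 'M[R]_(m, N)) (d : 'I_m -> R) (u : 'rV_N) :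
  (forall k, 0 <= d k) ->
  0 <= (u *m (Z^T *m diag_mx (\row_k d k) *m Z) *m u^T) 0 0.
Proof.
by move=> d0; rewrite gram_quad sumr_ge0 // => k _; rewrite mulr_ge0 ?sqr_ge0.
Qed.

Lemma gram_pos m N (Z : 'M[R]_(m, N)) (d : 'I_m -> R) (u : 'rV_N) :
  (forall k, 0 <= d k) -> u != 0 ->
  \det (Z^T *m diag_mx (\row_k d k) *m Z) != 0 ->
  0 < (u *m (Z^T *m diag_mx (\row_k d k) *m Z) *m u^T) 0 0.
Proof.
move=> d0 un0 dn0; rewrite lt_def gram_quad_ge0 // andbT.
apply/negP => /eqP q0; move/eqP: dn0; apply.
apply: (@singular_det _ _ u^T); last by rewrite trmx_eq0.
move: q0; rewrite gram_quad => /psumr_eq0P H.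
have {}H := H (fun k _ => mulr_ge0 (d0 k) (sqr_ge0 _)).
have {}H : forall k, d k * (Z *m u^T) k 0 = 0.
  move=> k; have /eqP := H k isT.
  by rewrite mulf_eq0 sqrf_eq0 => /orP [] /eqP ->; rewrite ?mul0r ?mulr0.
have E : diag_mx (\row_k d k) *m (Z *m u^T) = 0.
  apply/matrixP => k l; move: (H k); rewrite (ord1 l) mul_diag_mx !mxE; exact: id.
by rewrite -!mulmxA E mulmx0.
Qed.


Lemma gram_det_ge0 m N (Z : 'M[R]_(m, N)) (d : 'I_m -> R) :
  (forall k, 0 <= d k) -> 0 <= \det (Z^T *m diag_mx (\row_k d k) *m Z).
Proof.
move=> d0; have [->//|dn0] := eqVneq (\det (Z^T *m diag_mx (\row_k d k) *m Z)) 0.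
apply/ltW/pd_det; first exact: gram_sym.
by move=> u un0; apply: gram_pos.
Qed.
End PD.

Theorem lemma4 (R : realFieldType) (m p : nat) (X : 'M[R]_(m, p))
    (nu w : 'I_m -> R) (i : 'I_m) (j : 'I_p) :
  (p < m)%N -> (2 <= p)%N ->
  (forall k, 0 <= nu k) ->
  (forall k, 0 <= w k) -> \sum_k w k = 1 ->
  0 <= w i -> w i < 1 ->
  exists a b : R,
    0 <= a /\ 0 <= b /\
      (forall x, 0 <= x <= 1 ->
         fij X nu w i j x = a * x * (1 - x) ^+ (p - 2) + b * (1 - x) ^+ (p - 1)) /\
      (0 < fdet X nu w ->
         (forall x, 0 < x < 1 -> 0 < fij X nu w i j x) /\ 0 < a + b) /\
      (0 < w i ->
         b = fij X nu w i j 0 /\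
         a = (fminus X j nu w - b * (1 - w i) ^+ (p - 1))
               / (w i * (1 - w i) ^+ (p - 2))) /\
    (w i = 0 ->
         b = fminus X j nu w /\
         a = 2 ^+ (p - 1) * fij X nu w i j (2^-1) - b).
Proof.
move=> pm p2 nu0 w0 wsum wi0 wi1.
case: p X j pm p2 => [|[|n]] X j pm p2 //.
rewrite !subSS !subn0.
set Y := col' j X.
pose F (v : 'I_m -> R) := Y^T *m Wmx nu v *m Y.
have fijE x : fij X nu w i j x = \det (F (wpath w i x)) by [].
have fmE v : fminus X j nu v = \det (F v) by [].
set A := F (wpath w i 0).
set y := row i Y.
have FE x : F (wpath w i x) = (1 - x) *: A + (x * nu i) *: (y^T *m y).
  have WE : Wmx nu (wpath w i x)
      = (1 - x) *: Wmx nu (wpath w i 0) + (x * nu i) *: delta_mx i i.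
    apply/matrixP => a b; rewrite /Wmx !mxE.
    have [<-|ab] := eqVneq a b.
      rewrite !mulr1n /wpath; have [->|ai] := eqVneq a i.
        by rewrite /=; ring.
      by rewrite /=; ring.
    have -> : (a == i) && (b == i) = false.
      by apply/negP => /andP [/eqP ai /eqP bi]; rewrite ai bi eqxx in ab.
    by rewrite /=; ring.
  rewrite /F WE mulmxDr mulmxDl -!scalemxAr -!scalemxAl.
  congr (_ + _ *: _).
  rewrite -(@mul_delta_mx _ m 1 m 0 i i) /y rowE trmx_mul trmx_delta !mulmxA.
  done.
have [q Hq] := det_path A y (nu i).
have fE x : fij X nu w i j x
    = nu i * q * x * (1 - x) ^+ n + \det A * (1 - x) ^+ n.+1.
  by rewrite fijE FE Hq; ring.
have wpath_nonneg x : 0 <= x <= 1 -> forall k, 0 <= wpath w i x k * nu k.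
  move=> /andP[x0 x1] k; rewrite mulr_ge0 // /wpath; case: eqP => // _.
  by rewrite mulr_ge0 // divr_ge0 // subr_ge0 // ltW.
have fge0 x : 0 <= x <= 1 -> 0 <= fij X nu w i j x.
  move=> hx; rewrite fijE /F /Wmx.
  exact: (@gram_det_ge0 _ _ _ Y (fun k => wpath w i x k * nu k) (wpath_nonneg x hx)).
have b0 : 0 <= \det A by apply: (fge0 0); rewrite lexx ler01.
have a0 : 0 <= nu i * q.
  rewrite leNgt; apply/negP => aneg.
  move: (nu i * q) aneg (fE) => a aneg fE'.
  set b := \det A in b0 fE'.
  pose x := (b - a / 2) / (b - a).
  have ba : 0 < b - a by lra.
  have x0 : 0 < x by rewrite divr_gt0 //; lra.
  have x1 : x < 1 by rewrite ltr_pdivrMr // mul1r; lra.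
  have hx : 0 <= x <= 1 by rewrite !ltW.
  have := fge0 x hx; rewrite fE'.
  have key : a * x + b * (1 - x) = a / 2.
    rewrite /x; field; lra.
  have -> : a * x * (1 - x) ^+ n + b * (1 - x) ^+ n.+1
          = (1 - x) ^+ n * (a * x + b * (1 - x)) by rewrite exprS; ring.
  rewrite key pmulr_rge0 ?exprn_gt0 ?subr_gt0 //; lra.
exists (nu i * q), (\det A).
split; first exact: a0.
split; first exact: b0.
split; first by move=> x _; rewrite fE.
have half : 1 - 2^-1 = 2^-1 :> R by field.
split.
  move=> fpos.
  have fpos' : forall x, 0 < x < 1 -> 0 < fij X nu w i j x.
    move=> x /andP[x0 x1].
    rewrite fijE /F /Wmx.
    apply: pd_det; first exact: gram_sym.
    move=> z zn0.
    have XPD : forall u : 'rV_(n.+2), u != 0 ->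
        0 < (u *m (X^T *m Wmx nu w *m X) *m u^T) 0 0.
      move=> u un0; rewrite /Wmx.
      apply: (@gram_pos _ _ _ X (fun k => w k * nu k)) => //.
        by move=> k; rewrite mulr_ge0.
      by move: fpos; rewrite /fdet /Wmx => /lt0r_neq0.
    set S := col' j (1%:M : 'M[R]_(n.+2)).
    have YE : Y = X *m S by rewrite /Y /S mulmx_colsub mulmx1.
    have STS : S^T *m S = 1%:M.
      rewrite /S tr_col' trmx1 mul_rowsub_mx mul1mx.
      by apply/matrixP => a b; rewrite !mxE (inj_eq lift_inj).
    have uz : z *m S^T != 0.
      apply: contra zn0 => /eqP h.
      by rewrite -[z]mulmx1 -STS mulmxA h mul0mx.
    have pos_w : 0 < (z *m F w *m z^T) 0 0.
      have -> : z *m F w *m z^T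
          = (z *m S^T) *m (X^T *m Wmx nu w *m X) *m (z *m S^T)^T.
        by rewrite /F YE !trmx_mul trmxK !mulmxA.
      exact: XPD.
    pose c := Num.min x ((1 - x) / (1 - w i)).
    have c0 : 0 < c by rewrite lt_min x0 divr_gt0 // subr_gt0.
    have cle k : c * w k <= wpath w i x k.
      rewrite /wpath; case: eqP => [->|_].
        have hc : c <= x by rewrite ge_min lexx.
        nra.
      have hc : c <= (1 - x) / (1 - w i) by rewrite ge_min lexx orbT.
      by rewrite ler_wpM2r.
    apply: (lt_le_trans (mulr_gt0 c0 pos_w)).
    rewrite /F /Wmx !gram_quad mulr_sumr; apply: ler_sum => k _.
    by rewrite mulrA ler_wpM2r ?sqr_ge0 // mulrA ler_wpM2r.
  split => //.
  have := fpos' 2^-1 _; rewrite fE half.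
  have -> : nu i * q * 2^-1 * 2^-1 ^+ n + \det A * 2^-1 ^+ n.+1
          = (nu i * q + \det A) * 2^-1 ^+ n.+1 by rewrite exprS; ring.
  rewrite pmulr_lgt0 ?exprn_gt0 ?invr_gt0 ?ltr0n //; apply.
  by rewrite /=; lra.
have s0 : 1 - w i != 0 by rewrite subr_eq0 (gt_eqF wi1).
split.
  move=> wpos; split; first by [].
  have -> : fminus X j nu w = fij X nu w i j (w i).
    rewrite fmE fijE /F /Wmx; congr (\det (_ *m diag_mx _ *m _)).
    apply/matrixP => a k; rewrite !mxE /wpath; case: eqP => [->|_] //.
    by rewrite divff ?mul1r.
  rewrite fE exprS; field.
  by rewrite expf_neq0 // gt_eqF.
move=> wz.
have wE : Wmx nu (wpath w i 0) = Wmx nu w.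
  rewrite /Wmx; congr diag_mx.
  apply/matrixP => a k; rewrite !mxE /wpath; case: eqP => [->|_].
    by rewrite wz.
  by rewrite wz subr0 invr1 !mul1r.
split; first by rewrite fmE /A /F wE.
rewrite fE half !exprVn !exprS; field.
by rewrite expf_neq0 // pnatr_eq0.
Qed.
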